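(* Let $G=(V\cup\{s,t\},E)$ be an undirected series-parallel graph with source $s$ and sink $t$, let $x$ be a least core payoff of the corresponding Edge Path Coalitional Game, and let $e\in E$ be an edge contained in no minimum cardinality $s$-$t$ edge cut of $G$ (i.e., $C_e(G)=\emptyset$). Then $x_e=0$.
   Context: An undirected graph $G$ with source $s$ and sink $t$ is series-parallel if it can be reduced to a single edge between two vertices by repeatedly (1) replacing a pair of parallel edges by a single edge joining their common endpoints, and (2) replacing the two edges incident to a degree-2 vertex other than $s,t$ by a single edge (removing that vertex). $\mathcal{C}(G)$ denotes the set of minimum cardinality $s$-$t$ edge cuts of $G$ and $C_e(G)=\{S\in\mathcal{C}(G): e\in S\}$. The EPCG has players $N=E$ and $v(S)=1$ iff the edges of $S$ contain an $s$-$t$ path, else $0$. For payoff $x$, $e(x,S)=x(S)-v(S)$ with $x(S)=\sum_{i\in S}x_i$; the $\epsilon$-core is $\{x: x(N)=v(N),\ e(x,S)\ge-\epsilon\ \forall S\}$, and the least core is the $\epsilon$-core for the smallest $\epsilon$ for which it is non-empty (with payoffs $x_i\ge 0$). *)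

(* Defs.v *)
From HB Require Import structures.
From mathcomp Require Import all_boot all_order all_algebra.
Set Implicit Arguments. Unset Strict Implicit. Unset Printing Implicit Defensive.
Import Order.TTheory GRing.Theory Num.Theory.

(* A finite undirected multigraph: vertex type T, edge type E,
   each edge e has (unordered) endpoints ends e. *)

Section Graph.
Variables (T E : finType) (ends : E -> T * T) (s t : T).

Definition joins (e : E) (u v : T) : bool :=
  (ends e == (u, v)) || (ends e == (v, u)).

Definition adjS (S : {set E}) : rel T :=
  fun u v => [exists e in S, joins e u v].

Definition has_st_path (S : {set E}) : bool := connect (adjS S) s t.

Definition st_cut (S : {set E}) : bool := ~~ has_st_path (~: S).

Definition min_cut (S : {set E}) : Prop :=
  st_cut S /\ forall S' : {set E}, st_cut S' -> #|S| <= #|S'|.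

Definition uedge (p q : T * T) : bool := (p == q) || (p == (q.2, q.1)).

Definition state := ({set T} * seq (T * T))%type.

Inductive sp_step : state -> state -> Prop :=
  | sp_par (V : {set T}) (es rest : seq (T * T)) (e1 e2 : T * T) :
      perm_eq es (e1 :: e2 :: rest) -> uedge e1 e2 ->
      sp_step (V, es) (V, e1 :: rest)
  | sp_ser (V : {set T}) (es rest : seq (T * T)) (e1 e2 : T * T) (a w b : T) :
      w \in V -> w != s -> w != t -> a != w -> b != w ->
      perm_eq es (e1 :: e2 :: rest) -> uedge e1 (a, w) -> uedge e2 (w, b) ->
      all (fun p => (p.1 != w) && (p.2 != w)) rest ->
      sp_step (V, es) (V :\ w, (a, b) :: rest).

Inductive sp_reduces : state -> state -> Prop :=
  | spr_refl x : sp_reduces x x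
  | spr_step x y z : sp_step x y -> sp_reduces y z -> sp_reduces x z.

(* G = (T, E) with source s and sink t is series-parallel: the full graph
   reduces to a single edge joining s and t (on vertex set {s,t}). *)
Definition series_parallel : Prop :=
  exists p : T * T, uedge p (s, t) /\
    sp_reduces ([set: T], [seq ends e | e <- enum E]) ([set s; t], [:: p]).

Variable R : realFieldType.
Local Open Scope ring_scope.

Definition epcg_v (S : {set E}) : R := if has_st_path S then 1 else 0.

Definition payoff_sum (x : E -> R) (S : {set E}) : R := \sum_(i in S) x i.

Definition excess (x : E -> R) (S : {set E}) : R := payoff_sum x S - epcg_v S.

Definition eps_core (eps : R) (x : E -> R) : Prop :=
  (forall i, 0 <= x i) /\
  payoff_sum x [set: E] = epcg_v [set: E] /\
  (forall S : {set E}, - eps <= excess x S).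

Definition least_core (x : E -> R) : Prop :=
  exists eps : R, eps_core eps x /\
    forall (eps' : R) (y : E -> R), eps_core eps' y -> eps <= eps'.

End Graph.

(* Main.v *)
Require Import Defs.
From mathcomp Require Import all_boot all_order all_algebra.
From mathcomp Require Import ring lra.
Import Order.TTheory GRing.Theory Num.Theory.
Set Implicit Arguments. Unset Strict Implicit.
Local Open Scope ring_scope.

Lemma ex_minR (R : realFieldType) (I : finType) (F : I -> R) (i0 : I) :
  exists i, forall j, F i <= F j.
Proof.
case: (@arg_minP _ R I i0 xpredT F isT) => i _ H.
by exists i => j; apply: H.
Qed.

Definition gclamp (R : realFieldType) (l h r : R) : R :=
  if r <= l then 0 else if r <= h then r - l else h - l.

Lemma gclamp_step (R : realFieldType) (l h p b : R) :
  l <= h -> p < b -> (l <= p) || (b <= l) -> (h <= p) || (b <= h) ->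
  gclamp l h b - gclamp l h p = if (l <= p) && (p < h) then b - p else 0.
Proof.
rewrite /gclamp => lh pb nl nh.
case: (lerP b l) => ?; case: (lerP p l) => ?; case: (lerP b h) => ?; case: (lerP p h) => ?;
  case: (lerP l p) => ?; case: (ltrP p h) => ? /=; case/orP: nl => ?; case/orP: nh => ?; lra.
Qed.

Lemma gclamp_ge0 (R : realFieldType) (l h r : R) : l <= h -> 0 <= gclamp l h r.
Proof. rewrite /gclamp => ?; case: (lerP r l) => ?; case: (lerP r h) => ?; lra. Qed.

Lemma gclamp_le (R : realFieldType) (l h r : R) : l <= h -> gclamp l h r <= h - l.
Proof. rewrite /gclamp => ?; case: (lerP r l) => ?; case: (lerP r h) => ?; lra. Qed.

Lemma sum_ind_const (E : finType) (R : realFieldType) (P : pred E) (c : R) :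
  \sum_f (if P f then c else 0) = #|[set f | P f]|%:R * c.
Proof.
rewrite -big_mkcond /= mulr_natl -sumr_const.
by apply: eq_bigl => f; rewrite inE.
Qed.

Lemma level_step (T E : finType) (R : realFieldType) (d : T -> R) (lo hi : E -> R) (p b : R) :
  (forall f, lo f <= hi f) ->
  (forall f, exists u, lo f = d u) -> (forall f, exists v, hi f = d v) ->
  p < b -> (forall v, ~~ ((p < d v) && (d v < b))) ->
  \sum_f gclamp (lo f) (hi f) b - \sum_f gclamp (lo f) (hi f) p =
  #|[set f | (lo f <= p) && (p < hi f)]|%:R * (b - p).
Proof.
move=> lh hl hh pb nb.
rewrite -sumrB -sum_ind_const; apply: eq_bigr => f _; apply: gclamp_step => //.
- by case: (hl f) => u ->; have := nb u; rewrite negb_and -!leNgt.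
- by case: (hh f) => u ->; have := nb u; rewrite negb_and -!leNgt.
Qed.

Lemma level_sum (T E : finType) (R : realFieldType) (d : T -> R) (lo hi : E -> R)
  (k : nat) (D : R) :
  (forall f, lo f <= hi f) ->
  (forall f, exists u, lo f = d u) -> (forall f, exists v, hi f = d v) ->
  (forall p, 0 <= p -> p < D -> leq k #|[set f | (lo f <= p) && (p < hi f)]|) ->
  forall a b, 0 <= a -> a <= b -> b <= D ->
  k%:R * (b - a) <= \sum_f gclamp (lo f) (hi f) b - \sum_f gclamp (lo f) (hi f) a.
Proof.
move=> lh hl hh hk a b.
move: {2}#|[set v | (a < d v) && (d v < b)]| (leqnn #|[set v | (a < d v) && (d v < b)]|) => n.
elim: n a b => [|n IH] a b Hn a0 ab bD;
  (case: (eqVneq a b) => [-> | nab]; first by rewrite !subrr mulr0);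
  have {nab} ab' : a < b by rewrite lt_neqAle nab ab.
all: case: (pickP (fun v => (a < d v) && (d v < b))) => [w /andP[aw wb] | none].
- move: Hn; rewrite leqn0 => /eqP/cards0_eq/setP/(_ w).
  by rewrite !inE aw wb.
- rewrite (level_step lh hl hh ab'); last by move=> v; rewrite none.
  apply: ler_wpM2r; first by rewrite subr_ge0.
  rewrite ler_nat; apply: hk => //; exact: lt_le_trans bD.
- have e1 : k%:R * (b - d w) <= \sum_f gclamp (lo f) (hi f) b - \sum_f gclamp (lo f) (hi f) (d w).
    apply: IH; [|lra|lra|lra].
    rewrite -ltnS; apply: leq_trans Hn; apply: proper_card; apply/properP; split.
      by apply/subsetP => v; rewrite !inE => /andP[? ?]; apply/andP; split; lra.
    by exists w; rewrite !inE ?aw ?wb // ltxx.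
  have e2 : k%:R * (d w - a) <= \sum_f gclamp (lo f) (hi f) (d w) - \sum_f gclamp (lo f) (hi f) a.
    apply: IH; [|lra|lra|lra].
    rewrite -ltnS; apply: leq_trans Hn; apply: proper_card; apply/properP; split.
      by apply/subsetP => v; rewrite !inE => /andP[? ?]; apply/andP; split; lra.
    by exists w; rewrite !inE ?aw ?wb // ltxx andbF.
  have -> : k%:R * (b - a) = k%:R * (b - d w) + k%:R * (d w - a) by ring.
  set X := k%:R * _ in e1 *; set Y := k%:R * _ in e2 *; lra.
- rewrite (level_step lh hl hh ab'); last by move=> v; rewrite none.
  apply: ler_wpM2r; first by rewrite subr_ge0.
  rewrite ler_nat; apply: hk => //; exact: lt_le_trans bD.
Qed.
Lemma psum_le_setT (E : finType) (R : realFieldType) (x : E -> R) (S : {set E}) :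
  (forall i, 0 <= x i) -> payoff_sum x S <= payoff_sum x [set: E].
Proof.
move=> xge; rewrite /payoff_sum [X in X <= _]big_mkcond [X in _ <= X]big_mkcond.
by apply: ler_sum => i _; rewrite inE; case: (i \in S).
Qed.

Lemma psum_U1 (E : finType) (R : realFieldType) (x : E -> R) (S : {set E}) f :
  (forall i, 0 <= x i) -> payoff_sum x (f |: S) <= x f + payoff_sum x S.
Proof.
move=> xge; rewrite /payoff_sum (bigD1 f) ?setU11 //= lerD2l.
rewrite [X in X <= _]big_mkcond [X in _ <= X]big_mkcond.
apply: ler_sum => i _; rewrite in_setU1.
by case: (i == f); case: (i \in S) => //=; rewrite ?xge ?lexx.
Qed.

Lemma conn_mono (T E : finType) (ends : E -> T * T) (S S' : {set E}) u v :
  S \subset S' -> connect (adjS ends S) u v -> connect (adjS ends S') u v.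
Proof.
move=> sub; apply: connect_sub => a b /existsP[f /andP[fS j]].
by apply: connect1; apply/existsP; exists f; rewrite (subsetP sub) // j.
Qed.

Lemma conn0 (T E : finType) (ends : E -> T * T) u v :
  connect (adjS ends set0) u v -> u = v.
Proof.
move/connectP=> [[|y p] /= P ->] //.
by case/andP: P => /existsP[f]; rewrite inE.
Qed.

Lemma adjS_sym (T E : finType) (ends : E -> T * T) (S : {set E}) :
  symmetric (adjS ends S).
Proof.
move=> u v; rewrite /adjS; apply: eq_existsb => f.
by rewrite /joins orbC.
Qed.

Lemma joins_ends (T E : finType) (ends : E -> T * T) f :
  joins ends f (ends f).1 (ends f).2.
Proof. by rewrite /joins -surjective_pairing eqxx. Qed.

Theorem lemma1 (T E : finType) (ends : E -> T * T) (s t : T)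
  (R : realFieldType) (x : E -> R) (e : E) :
  s != t ->
  series_parallel ends s t ->
  least_core ends s t x ->
  (forall C : {set E}, min_cut ends s t C -> e \notin C) ->
  x e = 0.
Proof.
move=> Hst _ [eps [[xge [xsum xexc]] epsmin]] He.
case hpath : (has_st_path ends s t [set: E]); last first.
  rewrite /epcg_v hpath in xsum.
  by apply: (psumr_eq0P _ xsum) => // i _; apply: xge.
rewrite /epcg_v hpath in xsum.
have cutT : st_cut ends s t [set: E].
  rewrite /st_cut /has_st_path setCT; apply/negP => /conn0 est.
  by rewrite est eqxx in Hst.
case: (@arg_minnP _ [set: E] (st_cut ends s t) (fun S : {set E} => #|S|) cutT).
move=> C0 cutC0 minC0.
set k := #|C0|.
have k0 : (0 < k)%N.
  rewrite /k card_gt0; apply/negP => /eqP C00.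
  by move: cutC0; rewrite C00 /st_cut setC0 hpath.
have kR : 0 < (k%:R : R) by rewrite ltr0n.
have kinv0 : 0 < (k%:R : R)^-1 by rewrite invr_gt0.
have kinv1 : (k%:R : R)^-1 <= 1 by rewrite invf_le1 // ler1n.
have meet : forall S, has_st_path ends s t S -> exists2 i, i \in S & i \in C0.
  move=> S HS; apply/exists_inP; apply/negP => /exists_inP nex.
  move/negP: cutC0; apply; apply: conn_mono HS.
  apply/subsetP => i iS; rewrite inE; apply/negP => iC; apply: nex; by exists i.
have epsle : eps <= 1 - (k%:R)^-1.
  pose y := fun i => if i \in C0 then (k%:R : R)^-1 else 0.
  apply: (epsmin _ y); split; [|split].
  - by move=> i; rewrite /y; case: ifP => // _; rewrite ltW.
  - rewrite /epcg_v hpath /payoff_sum (eq_bigl xpredT); last by move=> i; rewrite inE.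
    rewrite sum_ind_const.
    have -> : [set f | f \in C0] = C0 by apply/setP => f; rewrite inE.
    by rewrite mulfV // gt_eqF.
  - move=> S; rewrite /excess /epcg_v.
    have yge : 0 <= payoff_sum y S.
      by apply: sumr_ge0 => i _; rewrite /y; case: ifP => // _; rewrite ltW.
    case HS: (has_st_path ends s t S); last by lra.
    case: (meet S HS) => i iS iC.
    have : y i <= payoff_sum y S.
      rewrite /payoff_sum (bigD1 i) //= lerDl; apply: sumr_ge0 => j _.
      by rewrite /y; case: ifP => // _; rewrite ltW.
    rewrite /y iC; lra.
have xlow : forall S, has_st_path ends s t S -> (k%:R : R)^-1 <= payoff_sum x S.
  move=> S HS; have := xexc S; rewrite /excess /epcg_v HS; lra.
have xle1 : forall S, payoff_sum x S <= 1.
  by move=> S; rewrite -xsum; apply: psum_le_setT.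
have xge0 : forall S, 0 <= payoff_sum x S.
  by move=> S; apply: sumr_ge0 => i _; apply: xge.
(* distances *)
pose h v S := if connect (adjS ends S) s v then payoff_sum x S else 1.
have hge : forall v S, 0 <= h v S by move=> v S; rewrite /h; case: ifP.
have hle : forall v S, h v S <= 1 by move=> v S; rewrite /h; case: ifP.
have exb : forall v, exists S0 : {set E}, [forall S, h v S0 <= h v S].
  move=> v; case: (ex_minR (h v) set0) => S0 HS0; exists S0; apply/forallP => S; exact: HS0.
pose Sm v := xchoose (exb v).
pose d v := h v (Sm v).
have dmin : forall v S, d v <= h v S by move=> v S; exact: (forallP (xchooseP (exb v))).
have dge : forall v, 0 <= d v by move=> v; apply: hge.
have ds : d s = 0.
  apply/le_anti; rewrite dge andbT; apply: le_trans (dmin s set0) _.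
  by rewrite /h connect0 /payoff_sum big_set0.
have dlip : forall f u v, joins ends f u v -> d v <= d u + x f.
  move=> f u v J; case: (boolP (connect (adjS ends (Sm u)) s u)) => cu.
  - have cv : connect (adjS ends (f |: Sm u)) s v.
      apply: connect_trans (conn_mono _ cu) _; first exact: subsetUr.
      by apply: connect1; apply/existsP; exists f; rewrite setU11 J.
    apply: le_trans (dmin v (f |: Sm u)) _.
    rewrite /h cv /d /h cu addrC; exact: psum_U1.
  - have : d u = 1 by rewrite /d /h (negbTE cu).
    have := dmin v set0; have := hle v set0; have := xge f; lra.
have dt : (k%:R : R)^-1 <= d t.
  rewrite /d /h; case: ifP => [ct|_ //]; exact: xlow.
pose lo f := if d (ends f).1 <= d (ends f).2 then d (ends f).1 else d (ends f).2.
pose hi f := if d (ends f).1 <= d (ends f).2 then d (ends f).2 else d (ends f).1.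
have lh : forall f, lo f <= hi f by move=> f; rewrite /lo /hi; case: (lerP (d (ends f).1) (d (ends f).2)) => ?; lra.
have hl : forall f, exists u, lo f = d u by move=> f; rewrite /lo; case: ifP => _; eexists.
have hh : forall f, exists u, hi f = d u by move=> f; rewrite /hi; case: ifP => _; eexists.
have lox : forall f, hi f - lo f <= x f.
  move=> f; have J := joins_ends ends f.
  have J' : joins ends f (ends f).2 (ends f).1 by rewrite /joins orbC.
  have := dlip _ _ _ J; have := dlip _ _ _ J'.
  by rewrite /lo /hi; case: (lerP (d (ends f).1) (d (ends f).2)) => ?; lra.
have lohi : forall f u v, joins ends f u v -> lo f <= d u /\ d v <= hi f.
  move=> f u v /orP[] /eqP Eq; rewrite /lo /hi Eq /=.
  by case: (lerP (d u) (d v)) => ?; split; lra.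
  by case: (lerP (d v) (d u)) => ?; split; lra.
pose cut p := [set f | (lo f <= p) && (p < hi f)].
have cutst : forall p, 0 <= p -> p < d t -> st_cut ends s t (cut p).
  move=> p p0 pD; rewrite /st_cut /has_st_path; apply/negP => Hc.
  have symc := sym_connect_sym (adjS_sym ends (~: cut p)).
  have cl : closed (adjS ends (~: cut p)) [pred v | d v <= p].
    apply: intro_closed => // u v /existsP[f /andP[fC J]].
    rewrite !inE /=; move=> du; rewrite leNgt; apply/negP => pv.
    move: fC; rewrite !inE; case: (lohi f u v J) => l1 l2.
    apply/negP; rewrite negbK; apply/andP; split; lra.
  have := closed_connect cl Hc; rewrite !inE /= ds p0.
  move/esym/idP; rewrite leNgt pD //.
have cutk : forall p, 0 <= p -> p < d t -> leq k #|cut p|.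
  by move=> p p0 pD; apply: minC0; apply: cutst.
pose F r := \sum_f gclamp (lo f) (hi f) r.
have lvl : forall a b, 0 <= a -> a <= b -> b <= d t -> k%:R * (b - a) <= F b - F a.
  exact: (level_sum lh hl hh cutk).
have F0 : 0 <= F 0 by apply: sumr_ge0 => f _; apply: gclamp_ge0.
have FD : F (d t) <= 1.
  rewrite -xsum /payoff_sum (eq_bigl xpredT); last by move=> i; rewrite inE.
  apply: ler_sum => f _; apply: le_trans (gclamp_le _ (lh f)) (lox f).
have kD : 1 <= k%:R * d t.
  have := ler_wpM2l (ltW kR) dt; rewrite mulfV // gt_eqF //.
have [//|xe0] := eqVneq (x e) 0.
have xep : 0 < x e by rewrite lt_def xe0 xge.
have ge : gclamp (lo e) (hi e) (d t) = x e.
  have tot : \sum_f (x f - gclamp (lo f) (hi f) (d t)) = 0.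
    apply/le_anti; apply/andP; split; last first.
      by apply: sumr_ge0 => f _; rewrite subr_ge0; apply: le_trans (gclamp_le _ (lh f)) (lox f).
    rewrite sumrB -/(F (d t)).
    have : \sum_f x f = 1.
      by rewrite -xsum /payoff_sum; apply: eq_bigl => i; rewrite inE.
    have := lvl 0 (d t) (lexx 0) (dge t) (lexx _); rewrite subr0.
    lra.
  have nn : forall f, true -> 0 <= x f - gclamp (lo f) (hi f) (d t).
    by move=> f _; rewrite subr_ge0; apply: le_trans (gclamp_le _ (lh f)) (lox f).
  by have := psumr_eq0P nn tot (i:=e) isT; move/eqP; rewrite subr_eq0 => /eqP ->.
have [loD lolt] : lo e < d t /\ lo e < hi e.
  move: ge; rewrite /gclamp; case: (lerP (d t) (lo e)) => ?;
    case: (lerP (d t) (hi e)) => ? ge; have := lh e; split; lra.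
set p := lo e in loD lolt *.
have p0 : 0 <= p by rewrite /p; case: (hl e) => u ->; apply: dge.
pose phi v := if p < d v then d v else d t.
case: (ex_minR phi t) => w wmin.
set q := phi w.
have qD : q <= d t by apply: le_trans (wmin t) _; rewrite /phi; case: ifP.
have pq : p < q by rewrite /q /phi; case: ifP => [H|_]; [exact: H | exact: loD].
have nob : forall v, ~~ ((p < d v) && (d v < q)).
  move=> v; apply/negP => /andP[pv vq].
  have := wmin v; move: vq; rewrite /q /phi pv /=; case: ifP => _; lra.
have stq : F q - F p = #|cut p|%:R * (q - p) := level_step lh hl hh pq nob.
have l1 := lvl q (d t) (le_trans p0 (ltW pq)) qD (lexx _).
have l2 := lvl 0 p (lexx 0) p0 (ltW (lt_le_trans pq qD)).
have ck : (#|cut p| <= k)%N.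
  rewrite leqNgt; apply/negP => gt.
  have gtR : (k.+1)%:R <= #|cut p|%:R :> R by rewrite ler_nat.
  rewrite -natr1 in gtR.
  have qp0 : 0 <= q - p by rewrite subr_ge0 ltW.
  have m := ler_wpM2r qp0 gtR.
  rewrite subr0 in l2.
  nra.
have mc : min_cut ends s t (cut p).
  split; first by apply: cutst.
  by move=> S' HS'; apply: leq_trans ck (minC0 _ HS').
by have := He _ mc; rewrite inE lexx lolt.
Qed.
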